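(* Let $\mathcal{C}$ be a category, $J$ a directed partially ordered set, and let $(f,f^j_\mu):\boldsymbol{X}\to\boldsymbol{Y}$ and $(g,g^j_\nu):\boldsymbol{Y}\to\boldsymbol{Z}=(Z_\nu,r_{\nu\nu'},N)$ be $J$-morphisms of inverse systems in $\mathcal{C}$, where $\boldsymbol{X}=(X_\lambda,p_{\lambda\lambda'},\Lambda)$, $\boldsymbol{Y}=(Y_\mu,q_{\mu\mu'},M)$. Then $(h,h^j_\nu)$ with $h=fg:N\to\Lambda$ and $h^j_\nu=g^j_\nu f^j_{g(\nu)}:X_{fg(\nu)}\to Z_\nu$ ($j\in J$, $\nu\in N$) is a $J$-morphism of $\boldsymbol{X}$ to $\boldsymbol{Z}$.
   Context: An inverse system $\boldsymbol{X}=(X_\lambda,p_{\lambda\lambda'},\Lambda)$ in $\mathcal{C}$: $\Lambda$ directed preordered, morphisms $p_{\lambda\lambda'}:X_{\lambda'}\to X_\lambda$ for $\lambda\le\lambda'$, $p_{\lambda\lambda}=1$, $p_{\lambda\lambda'}p_{\lambda'\lambda''}=p_{\lambda\lambda''}$. A $J$-morphism $(f,f^j_\mu):\boldsymbol{X}\to\boldsymbol{Y}=(Y_\mu,q_{\mu\mu'},M)$ consists of a function $f:M\to\Lambda$ and $\mathcal{C}$-morphisms $f^j_\mu:X_{f(\mu)}\to Y_\mu$ ($\mu\in M$, $j\in J$) such that for all $\mu\le\mu'$ there exist $\lambda\ge f(\mu),f(\mu')$ and $j_0\in J$ with $f^{j'}_\mu p_{f(\mu)\lambda}=q_{\mu\mu'}f^{j'}_{\mu'}p_{f(\mu')\lambda}$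 for all $j'\ge j_0$. *)

(* Defs.v *)
Set Implicit Arguments.
Unset Strict Implicit.

Record Category := {
  Ob :> Type;
  Hom : Ob -> Ob -> Type;
  idm : forall a : Ob, Hom a a;
  comp : forall a b c : Ob, Hom b c -> Hom a b -> Hom a c;
  comp_assoc : forall (a b c d : Ob) (h : Hom c d) (g : Hom b c) (f : Hom a b),
      comp h (comp g f) = comp (comp h g) f;
  comp_id_l : forall (a b : Ob) (f : Hom a b), comp (idm b) f = f;
  comp_id_r : forall (a b : Ob) (f : Hom a b), comp f (idm a) = f
}.
Arguments Hom {C} a b : rename.
Arguments idm {C} a : rename.
Arguments comp {C a b c} _ _ : rename.

Record DirectedPreorder := {
  dcarrier :> Type;
  dle : dcarrier -> dcarrier -> Prop;
  dle_refl : forall x, dle x x;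
  dle_trans : forall x y z, dle x y -> dle y z -> dle x z;
  dle_directed : forall x y, exists z, dle x z /\ dle y z
}.
Arguments dle {d} _ _ : rename.

Definition antisymmetric_dp (J : DirectedPreorder) : Prop :=
  forall x y : J, dle x y -> dle y x -> x = y.

Record InverseSystem (C : Category) := {
  isx_index : DirectedPreorder;
  isx_obj : isx_index -> Ob C;
  isx_bond : forall l l' : isx_index, dle l l' -> Hom (isx_obj l') (isx_obj l);
  isx_bond_id : forall (l : isx_index) (h : dle l l), isx_bond h = idm (isx_obj l);
  isx_bond_comp : forall (l l' l'' : isx_index) (h1 : dle l l') (h2 : dle l' l'')
      (h3 : dle l l''), comp (isx_bond h1) (isx_bond h2) = isx_bond h3
}.
Arguments isx_index {C} _.
Arguments isx_obj {C} _ _.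
Arguments isx_bond {C} _ {l l'} _.

Definition is_Jmorphism (C : Category) (J : DirectedPreorder)
  (X Y : InverseSystem C) (f : isx_index Y -> isx_index X)
  (fj : forall (j : J) (mu : isx_index Y), Hom (isx_obj X (f mu)) (isx_obj Y mu))
  : Prop :=
  forall (mu mu' : isx_index Y) (hmu : dle mu mu'),
    exists (lam : isx_index X) (h1 : dle (f mu) lam) (h2 : dle (f mu') lam),
    exists j0 : J, forall j' : J, dle j0 j' ->
      comp (fj j' mu) (isx_bond X h1)
      = comp (isx_bond Y hmu) (comp (fj j' mu') (isx_bond X h2)).
Arguments is_Jmorphism : clear implicits.

(* Main.v *)
Require Import Defs.

Theorem lemma1 (C : Category) (J : DirectedPreorder) (HJ : antisymmetric_dp J)
  (X Y Z : InverseSystem C)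
  (f : isx_index Y -> isx_index X)
  (fj : forall (j : J) (mu : isx_index Y), Hom (isx_obj X (f mu)) (isx_obj Y mu))
  (g : isx_index Z -> isx_index Y)
  (gj : forall (j : J) (nu : isx_index Z), Hom (isx_obj Y (g nu)) (isx_obj Z nu))
  (Hf : is_Jmorphism C J X Y f fj) (Hg : is_Jmorphism C J Y Z g gj) :
  is_Jmorphism C J X Z (fun nu => f (g nu))
    (fun j nu => comp (gj j nu) (fj j (g nu))).
Proof.
  intros nu nu' hnu.
  destruct (Hg nu nu' hnu) as [mu0 [k1 [k2 [j1 Hj1]]]].
  destruct (Hf _ _ k1) as [l1 [a1 [b1 [j2 Hj2]]]].
  destruct (Hf _ _ k2) as [l2 [a2 [b2 [j3 Hj3]]]].
  destruct (dle_directed l1 l2) as [lam [c1 c2]].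
  destruct (dle_directed j1 j2) as [j12 [d1 d2]].
  destruct (dle_directed j12 j3) as [j0 [d3 d4]].
  exists lam, (dle_trans a1 c1), (dle_trans a2 c2), j0.
  intros j' hj.
  assert (e1 : dle j1 j') by (eapply dle_trans; [exact d1|eapply dle_trans; eauto]).
  assert (e2 : dle j2 j') by (eapply dle_trans; [exact d2|eapply dle_trans; eauto]).
  assert (e3 : dle j3 j') by (eapply dle_trans; eauto).
  specialize (Hj1 j' e1). specialize (Hj2 j' e2). specialize (Hj3 j' e3).
  pose (P := dle_trans b1 c1).
  transitivity (comp (gj j' nu) (comp (isx_bond Y k1) (comp (fj j' mu0) (isx_bond X P)))).
  { rewrite <- (isx_bond_comp a1 c1 (dle_trans a1 c1)).
    rewrite <- !comp_assoc. rewrite (comp_assoc (fj j' (g nu))). rewrite Hj2.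
    rewrite <- !comp_assoc. rewrite (isx_bond_comp b1 c1 P). reflexivity. }
  transitivity (comp (isx_bond Z hnu) (comp (gj j' nu') (comp (isx_bond Y k2) (comp (fj j' mu0) (isx_bond X P))))).
  { rewrite !comp_assoc. rewrite Hj1. rewrite <- !comp_assoc. reflexivity. }
  rewrite <- (isx_bond_comp a2 c2 (dle_trans a2 c2)).
  rewrite <- !comp_assoc. rewrite (comp_assoc (fj j' (g nu'))). rewrite Hj3.
  rewrite <- !comp_assoc. rewrite (isx_bond_comp b2 c2 P). reflexivity.
Qed.
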